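(* Consider the iterative minimum repairing algorithm IMR($p$) described in the context, but run with a static parameter: instead of re-estimating the parameter in step (S1), a fixed vector $\phi=(\phi_1,\dots,\phi_p)\in\mathbb{R}^p$ is used in every iteration, i.e. $\phi^{(k)}=\phi$ for all $k\ge 0$. Then the repair result converges, i.e. $$\lim_{k\to+\infty}\sum_{i=1}^n\left(y_i^{(k+1)}-y_i^{(k)}\right)=0.$$
   Context: Let $n\ge 1$ and let $x=(x_1,\dots,x_n)\in\mathbb{R}^n$ be an observed time series. A set $L\subseteq\{1,\dots,n\}$ of labeled indices is given, together with labeled (true) values $y^{(0)}_t$ for $t\in L$. For $t\notin L$ put $y^{(0)}_t=x_t$. Fix an order $p\ge 1$ and a threshold $\tau\ge 0$. The algorithm IMR($p$) produces sequences $y^{(k)}=(y^{(k)}_1,\dots,y^{(k)}_n)$, $k=0,1,2,\dots$; write $z^{(k)}_t=y^{(k)}_t-x_t$. In iteration $k$: (S1) a parameter $\phi^{(k)}=(\phi^{(k)}_1,\dots,\phi^{(k)}_p)$ is obtained (normally by ordinary least squares from $z^{(k)}$; here it is the fixed $\phi$). (S2) For each $t\in\{p+1,\dots,n\}\setminus L$ compute the candidate $\hat y^{(k)}_t=\sum_{i=1}^p\phi^{(k)}_i z^{(k)}_{t-i}+x_t$; index $t$ is a candidate only if $|\hat y^{(k)}_t-y^{(k)}_t|>\tau$. (S3) If there is at least one candidate, choose a candidate $t^*$ minimizing $|\hat y^{(k)}_t-x_t|$ (ties broken arbitrarily), set $y^{(k+1)}_{t^*}=\hat y^{(k)}_{t^*}$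 and $y^{(k+1)}_t=y^{(k)}_t$ for $t\ne t^*$. If there is no candidate, the algorithm terminates and we set $y^{(k+1)}=y^{(k)}$ (so the sequence is constant from then on). In particular labeled values and the first $p$ values are never modified. *)

(* Defs.v *)
From Stdlib Require Import Reals Lra Lia List.
Import ListNotations.
Open Scope R_scope.

Definition sum_range (a m : nat) (f : nat -> R) : R :=
  fold_right (fun i acc => f i + acc) 0 (seq a m).

(* Sequences are functions nat -> R; only indices 1..n are meaningful. *)

Definition imr_cand (p : nat) (phi x y : nat -> R) (t : nat) : R :=
  sum_range 1 p (fun i => phi i * (y (t - i)%nat - x (t - i)%nat)) + x t.

Definition is_candidate (n p : nat) (L : nat -> Prop) (tau : R)
    (phi x y : nat -> R) (t : nat) : Prop :=
  (p + 1 <= t <= n)%nat /\ ~ L t /\ Rabs (imr_cand p phi x y t - y t) > tau.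

(* one iteration (S2)-(S3) of IMR(p) with static parameter phi;
   ties in the argmin are broken arbitrarily (any minimizer is allowed) *)
Definition imr_step (n p : nat) (L : nat -> Prop) (tau : R)
    (phi x y y' : nat -> R) : Prop :=
  (exists tstar,
      is_candidate n p L tau phi x y tstar /\
      (forall t, is_candidate n p L tau phi x y t ->
         Rabs (imr_cand p phi x y tstar - x tstar)
           <= Rabs (imr_cand p phi x y t - x t)) /\
      y' tstar = imr_cand p phi x y tstar /\
      (forall t, t <> tstar -> y' t = y t))
  \/
  ((forall t, ~ is_candidate n p L tau phi x y t) /\ (forall t, y' t = y t)).

Definition imr_init (L : nat -> Prop) (x ylab y0 : nat -> R) : Prop :=
  forall t, (L t -> y0 t = ylab t) /\ (~ L t -> y0 t = x t).

Definition imr_run (n p : nat) (L : nat -> Prop) (tau : R)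
    (phi x ylab : nat -> R) (y : nat -> nat -> R) : Prop :=
  imr_init L x ylab (y 0%nat) /\
  forall k, imr_step n p L tau phi x (y k) (y (S k)).

(* Main.v *)
Require Import Defs.
From Stdlib Require Import Reals Lra Lia List Classical.
Open Scope R_scope.

Lemma sum_range_ext : forall m a f g,
  (forall i, (a <= i < a + m)%nat -> f i = g i) ->
  sum_range a m f = sum_range a m g.
Proof.
  induction m as [|m IH]; intros a f g H; unfold sum_range; simpl; auto.
  rewrite (H a) by lia. f_equal.
  apply (IH (S a)). intros i Hi; apply H; lia.
Qed.

Lemma sum_range_zero : forall m a f,
  (forall i, (a <= i < a + m)%nat -> f i = 0) -> sum_range a m f = 0.
Proof.
  induction m as [|m IH]; intros a f H; unfold sum_range; simpl; auto.
  rewrite (H a) by lia.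
  change (fold_right (fun i acc => f i + acc) 0 (seq (S a) m)) with (sum_range (S a) m f).
  rewrite (IH (S a)). lra. intros i Hi; apply H; lia.
Qed.

Section Proof.
Variables (n p : nat) (x : nat -> R) (L : nat -> Prop) (phi : nat -> R) (tau : R)
  (y : nat -> nat -> R).
Hypothesis Htau : 0 <= tau.
Hypothesis Hstep : forall k, imr_step n p L tau phi x (y k) (y (S k)).

Lemma step_cases k : (forall t, y (S k) t = y k t) \/
  exists ts, is_candidate n p L tau phi x (y k) ts /\
    y (S k) ts = imr_cand p phi x (y k) ts /\
    (forall t, t <> ts -> y (S k) t = y k t).
Proof.
  destruct (Hstep k) as [[ts [H1 [_ [H3 H4]]]] | [_ H]].
  - right; exists ts; auto.
  - left; auto.
Qed.

Lemma const_from K t : (forall k, (K <= k)%nat -> y (S k) t = y k t) ->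
  forall k, (K <= k)%nat -> y k t = y K t.
Proof.
  intros H k Hk. induction k as [|k IH].
  - assert (K = 0%nat) by lia; subst; auto.
  - destruct (Nat.eq_dec K (S k)) as [->|Hne]; auto.
    rewrite H by lia. apply IH; lia.
Qed.

Definition stable m K := forall k, (K <= k)%nat -> forall t, (t <= m)%nat -> y k t = y K t.

Lemma stable_all : forall m, exists K, stable m K.
Proof.
  induction m as [|m [K IH]].
  - exists 0%nat. intros k Hk t Ht. assert (t = 0%nat) by lia; subst.
    apply const_from; [|lia]. intros j _.
    destruct (step_cases j) as [H|[ts [[Hc _] [_ H3]]]]; auto.
    apply H3; lia.
  - destruct (classic ((p + 1 <= S m <= n)%nat /\ ~ L (S m))) as [Hm|Hm].
    + set (c := imr_cand p phi x (y K) (S m)).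
      assert (Hc : forall k, (K <= k)%nat -> imr_cand p phi x (y k) (S m) = c).
      { intros k Hk. unfold c, imr_cand. f_equal. apply sum_range_ext.
        intros i Hi. rewrite (IH k Hk) by lia. reflexivity. }
      destruct (classic (exists k0, (K <= k0)%nat /\ y (S k0) (S m) <> y k0 (S m)))
        as [[k0 [Hk0 Hne]]|Hno].
      * assert (E0 : y (S k0) (S m) = c).
        { destruct (step_cases k0) as [H|[ts [_ [H2 H3]]]].
          - exfalso; apply Hne, H.
          - destruct (Nat.eq_dec ts (S m)) as [->|Hts].
            + rewrite H2. apply Hc; auto.
            + exfalso; apply Hne, H3; auto. }
        assert (Inv : forall j, y (S k0 + j) (S m) = c).
        { induction j as [|j IHj]. rewrite Nat.add_0_r; auto.
          replace (S k0 + S j)%nat with (S (S k0 + j)) by lia.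
          destruct (step_cases (S k0 + j)) as [H|[ts [Hcand [_ H3]]]].
          - rewrite H; auto.
          - destruct (Nat.eq_dec ts (S m)) as [->|Hts].
            + exfalso. destruct Hcand as [_ [_ Hr]].
              rewrite Hc in Hr by lia. rewrite IHj in Hr.
              replace (c - c) with 0 in Hr by ring. rewrite Rabs_R0 in Hr. lra.
            + rewrite H3 by auto. auto. }
        exists (S k0). intros k Hk t Ht.
        destruct (Nat.eq_dec t (S m)) as [->|Htm].
        -- replace k with (S k0 + (k - S k0))%nat by lia. rewrite Inv.
           replace (S k0) with (S k0 + 0)%nat by lia. rewrite Inv. auto.
        -- rewrite (IH k) by lia. rewrite (IH (S k0)) by lia. auto.
      * exists K. intros k Hk t Ht.
        destruct (Nat.eq_dec t (S m)) as [->|Htm].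
        -- apply const_from; auto. intros j Hj.
           destruct (Req_dec (y (S j) (S m)) (y j (S m))) as [E|E]; auto.
           exfalso; apply Hno; exists j; auto.
        -- apply IH; lia.
    + exists K. intros k Hk t Ht.
      destruct (Nat.eq_dec t (S m)) as [->|Htm].
      * apply const_from; auto. intros j _.
        destruct (step_cases j) as [H|[ts [[Hc1 [Hc2 _]] [_ H3]]]]; auto.
        apply H3. intros E. subst ts. apply Hm; auto.
      * apply IH; lia.
Qed.

End Proof.

Theorem proposition1 (n p : nat) (x : nat -> R) (L : nat -> Prop)
    (ylab : nat -> R) (phi : nat -> R) (tau : R)
    (y : nat -> nat -> R) :
  (1 <= n)%nat -> (1 <= p)%nat -> 0 <= tau ->
  (forall t, L t -> (1 <= t <= n)%nat) ->
  imr_run n p L tau phi x ylab y ->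
  Un_cv (fun k => sum_range 1 n (fun i => y (S k) i - y k i)) 0.
Proof.
  intros _ _ Htau _ [_ Hstep].
  destruct (stable_all n p x L phi tau y Htau Hstep n) as [K HK].
  intros eps Heps. exists K. intros k Hk. unfold R_dist.
  rewrite sum_range_zero.
  - rewrite Rminus_0_r, Rabs_R0; auto.
  - intros i Hi. rewrite (HK (S k)) by lia. rewrite (HK k) by lia. ring.
Qed.
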